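(* Let $\mathfrak{M}$ be a variety of associative rings such that for all finite rings $R,S\in\mathfrak{M}$, $\Gamma(R)\cong\Gamma(S)$ implies $R\cong S$. Then there exist $m\in\mathbb{N}$, $g(x)\in\mathbb{Z}[x]$ and an integer $d$ such that $mx\in T(\mathfrak{M})$ and $dx+x^2g(x)\in T(\mathfrak{M})$, where either $d=1$ or $d=q_1q_2\cdots q_l$ with $q_1,\ldots,q_l$ pairwise distinct prime divisors of $m$.
   Context: All rings are associative, not necessarily commutative and not necessarily with identity. For a ring $R$, the zero-divisor graph $\Gamma(R)$ is the graph whose vertices are all nonzero (one-sided or two-sided) zero-divisors of $R$, two distinct vertices $x,y$ being adjacent iff $xy=0$ or $yx=0$. For a variety $\mathfrak{M}$, $T(\mathfrak{M})$ denotes the T-ideal (in the free associative ring $\mathbb{Z}\langle x_1,x_2,\ldots\rangle$) of all polynomial identities satisfied by all rings of $\mathfrak{M}$. *)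

(* Defs.v *)
From HB Require Import structures.
From mathcomp Require Import all_boot all_order all_algebra.
Set Implicit Arguments. Unset Strict Implicit. Unset Printing Implicit Defensive.
Import GRing.Theory.
Local Open Scope ring_scope.

Record rng := Rng {
  rcar :> zmodType;
  rmul : rcar -> rcar -> rcar;
  rmulA : forall x y z, rmul x (rmul y z) = rmul (rmul x y) z;
  rmulDl : forall x y z, rmul (x + y) z = rmul x z + rmul y z;
  rmulDr : forall x y z, rmul x (y + z) = rmul x y + rmul x z }.

(* Elements of the free (non-unital) associative ring Z<x_0, x_1, ...>,
   presented as terms; two terms denote the same element iff they evaluate
   equally in every rng. *)
Inductive term :=
| tVar of nat
| tZero
| tAdd of term & term
| tNeg of term
| tScal of int & term
| tMul of term & term.

Fixpoint eval (R : rng) (a : nat -> R) (t : term) : R :=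
  match t with
  | tVar i => a i
  | tZero => 0
  | tAdd u v => eval a u + eval a v
  | tNeg u => - eval a u
  | tScal z u => eval a u *~ z
  | tMul u v => rmul (eval a u) (eval a v)
  end.

Definition identity_of (R : rng) (f : term) := forall a : nat -> R, eval a f = 0.

Definition in_variety (E : term -> Prop) (R : rng) :=
  forall f, E f -> identity_of R f.

Definition T_ideal (E : term -> Prop) (f : term) :=
  forall R : rng, in_variety E R -> identity_of R f.

Definition finite_rng (R : rng) := exists s : seq R, forall x : R, x \in s.

Definition is_zd (R : rng) (x : R) :=
  x != 0 /\ exists y : R, y != 0 /\ (rmul x y = 0 \/ rmul y x = 0).
Definition zdv (R : rng) := {x : R | is_zd x}.
Definition zadj (R : rng) (x y : zdv R) :=
  proj1_sig x <> proj1_sig y /\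
  (rmul (proj1_sig x) (proj1_sig y) = 0 \/ rmul (proj1_sig y) (proj1_sig x) = 0).
Definition zd_graph_iso (R S : rng) :=
  exists f : zdv R -> zdv S, bijective f /\ forall x y, zadj x y <-> zadj (f x) (f y).

Definition rng_iso (R S : rng) :=
  exists f : R -> S, [/\ bijective f,
    forall x y, f (x + y) = f x + f y &
    forall x y, f (rmul x y) = rmul (f x) (f y)].

(* tpowS t n = t^(n+1) *)
Fixpoint tpowS (t : term) (n : nat) : term :=
  match n with 0 => t | n'.+1 => tMul (tpowS t n') t end.

(* x2g g t = t^2 * g(t) for g in Z[x] *)
Definition x2g (g : {poly int}) (t : term) : term :=
  foldr tAdd tZero [seq tScal g`_i (tpowS t i.+1) | i <- iota 0 (size g)].

(* Main.v *)
Set Warnings "-notation-overridden,-ambiguous-paths".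
Require Import Defs.
From HB Require Import structures.
From mathcomp Require Import all_boot all_order all_algebra all_fingroup.
From Stdlib Require Import ProofIrrelevance Classical.
From mathcomp Require Import zify ring lra.
Import GRing.Theory Num.Theory.
Local Open Scope ring_scope.

Section RngL.
Variable R : rng.
Implicit Types x y : R.
Lemma rmul0l y : rmul 0 y = 0.
Proof. apply: (@addrI _ (rmul 0 y)); by rewrite -rmulDl !addr0. Qed.
Lemma rmul0r x : rmul x 0 = 0.
Proof. apply: (@addrI _ (rmul x 0)); by rewrite -rmulDr !addr0. Qed.
Lemma rmulNl x y : rmul (- x) y = - rmul x y.
Proof. apply: (@addrI _ (rmul x y)); by rewrite -rmulDl !subrr rmul0l. Qed.
Lemma rmulNr x y : rmul x (- y) = - rmul x y.
Proof. apply: (@addrI _ (rmul x y)); by rewrite -rmulDr !subrr rmul0r. Qed.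
Lemma rmulnl x y n : rmul (x *+ n) y = rmul x y *+ n.
Proof. elim: n => [|n IH]; first by rewrite !mulr0n rmul0l. by rewrite !mulrS rmulDl IH. Qed.
Lemma rmulnr x y n : rmul x (y *+ n) = rmul x y *+ n.
Proof. elim: n => [|n IH]; first by rewrite !mulr0n rmul0r. by rewrite !mulrS rmulDr IH. Qed.
Lemma rmulzl x y (z : int) : rmul (x *~ z) y = rmul x y *~ z.
Proof. case: z => n; first exact: rmulnl. by rewrite NegzE !mulrNz rmulNl -!pmulrn rmulnl. Qed.
Lemma rmulzr x y (z : int) : rmul x (y *~ z) = rmul x y *~ z.
Proof. case: z => n; first exact: rmulnr. by rewrite NegzE !mulrNz rmulNr -!pmulrn rmulnr. Qed.
End RngL.

Fixpoint sadd (p q : seq int) : seq int :=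
  match p with
  | [::] => q
  | c :: p' => match q with [::] => p | d :: q' => (c + d) :: sadd p' q' end
  end.
Definition sscale (k : int) (p : seq int) := map (fun c => k * c) p.
Fixpoint smul (p q : seq int) : seq int :=
  match p with [::] => [::] | c :: p' => 0 :: sadd (sscale c q) (smul p' q) end.
Fixpoint sdil (k : int) (p : seq int) : seq int :=
  match p with [::] => [::] | c :: p' => (c * k) :: sscale k (sdil k p') end.
Fixpoint ev {R : rng} (s : seq int) (a : R) : R :=
  match s with [::] => 0 | c :: s' => a *~ c + rmul a (ev s' a) end.

Lemma nth_sadd p q n : nth 0 (sadd p q) n = nth 0 p n + nth 0 q n.
Proof.
elim: p q n => [|c p IH] [|d q] [|n] //=; by rewrite ?addr0 ?add0r ?nth_nil ?addr0.
Qed.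
Lemma nth_sscale k p n : nth 0 (sscale k p) n = k * nth 0 p n.
Proof. elim: p n => [|c p IH] [|n] //=; by rewrite mulr0. Qed.
Lemma nth_sdil k p n : nth 0 (sdil k p) n = nth 0 p n * k ^+ n.+1.
Proof.
elim: p n => [|c p IH] [|n] /=; rewrite ?mul0r ?expr1 //.
by rewrite nth_sscale IH [in RHS]exprS mulrCA.
Qed.
Lemma nth_smul0 p q : nth 0 (smul p q) 0 = 0.
Proof. by case: p. Qed.

Section EvL.
Variable R : rng.
Implicit Types a : R.
Lemma ev_add p q a : ev (sadd p q) a = ev p a + ev q a.
Proof.
elim: p q => [|c p IH] [|d q] /=; rewrite ?add0r ?addr0 //.
by rewrite IH mulrzDr rmulDr addrACA.
Qed.
Lemma ev_scale k p a : ev (sscale k p) a = ev p a *~ k.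
Proof.
elim: p => [|c p IH] /=; first by rewrite mul0rz.
by rewrite IH rmulzr mulrzDl mulrC mulrzA.
Qed.
Lemma ev_mul p q a : ev (smul p q) a = rmul (ev p a) (ev q a).
Proof.
elim: p => [|c p IH] /=; first by rewrite rmul0l.
by rewrite mulr0z add0r ev_add ev_scale IH rmulDl rmulDr rmulzr rmulzl rmulA.
Qed.
Lemma ev_dil k p a : ev (sdil k p) a = ev p (a *~ k).
Proof.
elim: p => [|c p IH] //=.
by rewrite ev_scale IH rmulzr rmulzl mulrzA mulrzAC.
Qed.
Lemma ev_zero s a : (forall i, nth 0 s i = 0) -> ev s a = 0.
Proof.
elim: s => [|c s IH] //= H. rewrite IH; last by move=> i; exact: (H i.+1).
by rewrite rmul0r addr0 (H 0%N : c = 0) mulr0z.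
Qed.
Lemma ev_head s a : (forall i, (0 < i)%N -> nth 0 s i = 0) -> ev s a = a *~ nth 0 s 0.
Proof.
case: s => [|c s] H /=; first by rewrite mulr0z.
by rewrite ev_zero ?rmul0r ?addr0 // => i; exact: (H i.+1).
Qed.
End EvL.
Fixpoint polyOf (i : nat) (t : term) : seq int :=
  match t with
  | tVar j => if j == i then [:: 1] else [::]
  | tZero => [::]
  | tAdd u v => sadd (polyOf i u) (polyOf i v)
  | tNeg u => sscale (-1) (polyOf i u)
  | tScal z u => sscale z (polyOf i u)
  | tMul u v => smul (polyOf i u) (polyOf i v)
  end.

Definition single {R : rng} (i : nat) (a : R) : nat -> R := fun k => if k == i then a else 0.

Lemma eval_polyOf (R : rng) i (a : R) t : eval (single i a) t = ev (polyOf i t) a.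
Proof.
elim: t => [j| |u IHu v IHv|u IHu|z u IHu|u IHu v IHv] /=.
- rewrite /single; case: (j == i) => /=; last by [].
  by rewrite rmul0r addr0.
- by [].
- by rewrite ev_add IHu IHv.
- by rewrite ev_scale IHu mulrN1z.
- by rewrite ev_scale IHu.
- by rewrite ev_mul IHu IHv.
Qed.

Definition lin (i : nat) (t : term) : int := nth 0 (polyOf i t) 0.

Fixpoint vb (t : term) : nat :=
  match t with
  | tVar j => j.+1 | tZero => 0 | tAdd u v => maxn (vb u) (vb v) | tNeg u => vb u
  | tScal _ u => vb u | tMul u v => maxn (vb u) (vb v) end.

Lemma eval_zero (R : rng) (hz : forall x y : R, rmul x y = 0) (a : nat -> R) t n :
  (vb t <= n)%N -> eval a t = \sum_(k < n) a k *~ lin k t.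
Proof.
elim: t n => [j| |u IHu v IHv|u IHu|z u IHu|u IHu v IHv] n /= hb.
- rewrite (bigD1 (Ordinal hb)) //= /lin /= eqxx mulr1z big1 ?addr0 // => k hk.
  rewrite /= ifN ?mulr0z //. apply: contra hk => /eqP e. by apply/eqP/val_inj.
- by rewrite big1 // => k _; rewrite /lin /= mulr0z.
- rewrite geq_max in hb; case/andP: hb => h1 h2.
  rewrite (IHu n h1) (IHv n h2) -big_split /=; apply: eq_bigr => k _.
  by rewrite /lin /= nth_sadd mulrzDr.
- rewrite (IHu n hb) -sumrN; apply: eq_bigr => k _.
  by rewrite /lin /= nth_sscale mulN1r mulrNz.
- rewrite (IHu n hb) mulrz_suml; apply: eq_bigr => k _.
  by rewrite /lin /= nth_sscale mulrC mulrzA.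
- by rewrite hz big1 // => k _; rewrite /lin /= nth_smul0 mulr0z.
Qed.

Definition zrng (A : zmodType) : rng :=
  @Rng A (fun _ _ => 0) (fun _ _ _ => erefl) (fun _ _ _ => esym (addr0 0))
    (fun _ _ _ => esym (addr0 0)).

Lemma zrng_in (E : term -> Prop) (A : zmodType) (N : nat) :
  (forall x : A, x *+ N = 0) ->
  (forall f, E f -> forall k, (N%:Z %| lin k f)%Z) -> in_variety E (zrng A).
Proof.
move=> hN hE f Ef a.
rewrite (@eval_zero (zrng A) (fun _ _ => erefl) a f (vb f) (leqnn _)).
apply: big1 => k _. rewrite -(divzK (hE f Ef k)) mulrzA.
by rewrite -pmulrn hN.
Qed.
Lemma zd_zrng {A : zmodType} {x : zrng A} : x != 0 -> is_zd x.
Proof. move=> hx; split => //; exists x; split => //; by left. Qed.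

Section ZG.
Variables (A B : zmodType) (h : A -> B) (g : B -> A).
Hypotheses (hK : cancel h g) (gK : cancel g h) (h0 : h 0 = 0).

Lemma hnz {x : A} : x != 0 -> h x != 0.
Proof. move=> hx; apply/eqP => e; move/eqP: hx; apply; by rewrite -(hK x) e -h0 hK. Qed.
Lemma gnz {x : B} : x != 0 -> g x != 0.
Proof.
move=> hx; apply/eqP => e; move/eqP: hx; apply; by rewrite -(gK x) e h0.
Qed.

Definition fz (x : zdv (zrng A)) : zdv (zrng B) :=
  exist _ (h (sval x)) (zd_zrng (hnz (proj1 (proj2_sig x)))).
Definition gz (x : zdv (zrng B)) : zdv (zrng A) :=
  exist _ (g (sval x)) (zd_zrng (gnz (proj1 (proj2_sig x)))).

Lemma zrng_graph : zd_graph_iso (zrng A) (zrng B).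
Proof.
exists fz; split.
  exists gz.
  - case=> x px /=; rewrite /gz /fz /=; move: (zd_zrng _); rewrite hK => q.
    by rewrite (proof_irrelevance _ q px).
  - case=> x px /=; rewrite /gz /fz /=; move: (zd_zrng _); rewrite gK => q.
    by rewrite (proof_irrelevance _ q px).
case=> x px [y py]; rewrite /zadj /fz /=; split; case=> hxy _; split; try by left.
  by move=> e; apply: hxy; rewrite -(hK x) e hK.
by move=> e; apply: hxy; rewrite e.
Qed.
End ZG.

Lemma zrng_noniso (A B : zmodType) (x : A) (p : nat) :
  x *+ p != 0 -> (forall y : B, y *+ p = 0) -> ~ rng_iso (zrng A) (zrng B).
Proof.
move=> hx hB [f [[g fK gK] fD _]].
have f0 : f 0 = 0.
  apply: (@addrI _ (f 0)); by rewrite -fD !addr0.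
have fn : forall n, f (x *+ n) = f x *+ n.
  by elim=> [|n IH]; rewrite ?mulr0n // !mulrS fD IH.
move/eqP: hx; apply; by rewrite -(fK (x *+ p)) fn hB -f0 fK.
Qed.
Lemma fin_bij0 (A B : finType) (a0 : A) (b0 : B) : #|A| = #|B| ->
  exists h : A -> B, bijective h /\ h a0 = b0.
Proof.
move=> e.
pose h1 := fun x : A => (enum_val (cast_ord e (enum_rank x)) : B).
have h1i : injective h1.
  by move=> x y /enum_val_inj /cast_ord_inj /enum_rank_inj.
exists (fun x => tperm (h1 a0) b0 (h1 x)); split; last by rewrite tpermL.
apply: inj_card_bij; last by rewrite e.
by move=> x y /perm_inj /h1i.
Qed.

Lemma mulrn_pair (U V : zmodType) (y : U * V) n : y *+ n = (y.1 *+ n, y.2 *+ n).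
Proof. case: y => a b; elim: n => [|n IH] //; by rewrite !mulrS IH. Qed.

Lemma zrng_fin (A : finZmodType) : finite_rng (zrng A).
Proof. exists (enum A) => x; by rewrite mem_enum. Qed.

Lemma contra_sq (E : term -> Prop) (p : nat) : prime p ->
  (forall R S : rng, in_variety E R -> in_variety E S ->
     finite_rng R -> finite_rng S -> zd_graph_iso R S -> rng_iso R S) ->
  (forall f, E f -> forall k, ((p * p)%N%:Z %| lin k f)%Z) -> False.
Proof.
move=> pp H hE.
have p1 : (1 < p)%N by exact: prime_gt1.
have pp1 : (1 < p * p)%N by rewrite (@ltn_trans p) // -{1}(muln1 p) ltn_pmul2l // ltnW.
have zA : forall x : 'Z_(p * p), x *+ (p * p) = 0.
  by move=> x; rewrite -mulr_natr pchar_Zp // mulr0.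
have zp : forall z : 'Z_p, z *+ p = 0.
  by move=> z; rewrite -mulr_natr pchar_Zp // mulr0.
have zB : forall y : ('Z_p * 'Z_p)%type, y *+ p = 0.
  by move=> y; rewrite mulrn_pair !zp.
have zB2 : forall y : ('Z_p * 'Z_p)%type, y *+ (p * p) = 0.
  by move=> y; rewrite mulrnA zB ?mul0rn.
have cA : #|'Z_(p * p)| = #|{: 'Z_p * 'Z_p}|.
  by rewrite card_prod !card_ord !Zp_cast.
have [h [hb h0]] := @fin_bij0 _ _ (0 : 'Z_(p * p)) (0 : 'Z_p * 'Z_p) cA.
have [g hK gK] := hb.
have MA := @zrng_in E _ (p * p) zA hE.
have MB := @zrng_in E _ (p * p) zB2 hE.
have FA : finite_rng (zrng 'Z_(p * p)).
  by exists (enum {: 'Z_(p * p)}) => x; rewrite mem_enum.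
have FB : finite_rng (zrng ('Z_p * 'Z_p)%type).
  by exists (enum {: 'Z_p * 'Z_p}) => x; rewrite mem_enum.
have := H _ _ MA MB FA FB (@zrng_graph _ _ h g hK gK h0).
apply: (@zrng_noniso 'Z_(p * p) ('Z_p * 'Z_p)%type 1 p _ zB).
apply/eqP => e.
have := congr1 val e; rewrite /= val_Zp_nat // modn_small ?prime_gt0 //; last first.
  by rewrite -{1}(muln1 p) ltn_pmul2l // prime_gt0.
by move=> e0; move: (prime_gt0 pp); rewrite e0.
Qed.
Definition Did (E : term -> Prop) (s : seq int) :=
  forall R : rng, in_variety E R -> forall a : R, ev s a = 0.
Definition DD (E : term -> Prop) (z : int) := exists s, nth 0 s 0 = z /\ Did E s.

Lemma D_lin E f k : E f -> DD E (lin k f).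
Proof.
move=> Ef; exists (polyOf k f); split => // R hR a.
by rewrite -eval_polyOf; apply: hR.
Qed.
Lemma D_add E z w : DD E z -> DD E w -> DD E (z + w).
Proof.
move=> [s [hs Ds]] [t [ht Dt]]; exists (sadd s t); split; first by rewrite nth_sadd hs ht.
by move=> R hR a; rewrite ev_add Ds ?Dt ?addr0.
Qed.
Lemma D_scale E c z : DD E z -> DD E (c * z).
Proof.
move=> [s [hs Ds]]; exists (sscale c s); split; first by rewrite nth_sscale hs.
by move=> R hR a; rewrite ev_scale Ds ?mul0rz.
Qed.

Definition step (j : nat) (s : seq int) := sadd (sdil 2 s) (sscale (- 2 ^+ j) s).
Lemma Did_step E j s : Did E s -> Did E (step j s).
Proof. by move=> Ds R hR a; rewrite ev_add ev_dil ev_scale !Ds ?mul0rz ?addr0. Qed.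
Lemma nth_step j s i : nth 0 (step j s) i = nth 0 s i * (2 ^+ i.+1 - 2 ^+ j).
Proof. by rewrite nth_sadd nth_sdil nth_sscale mulrBr mulNr [_ * nth 0 s i]mulrC. Qed.
Lemma nth_foldr J s i :
  nth 0 (foldr step s J) i = nth 0 s i * \prod_(j <- J) (2 ^+ i.+1 - 2 ^+ j).
Proof.
elim: J => [|j J IH] /=; first by rewrite big_nil mulr1.
by rewrite nth_step IH big_cons -mulrA [_ * (2 ^+ _ - _)]mulrC.
Qed.
Lemma Did_foldr E J s : Did E s -> Did E (foldr step s J).
Proof. by move=> Ds; elim: J => [|j J IH] //=; apply: Did_step. Qed.

Lemma two_neq j : (2 <= j)%N -> (2 ^+ 1 - 2 ^+ j : int) != 0.
Proof.
case: j => [|[|k]] // _; rewrite subr_eq0 expr1 !exprS.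
have h : (1 <= (2 : int) ^+ k) by rewrite exprn_ege1.
apply/negP => /eqP e. lia.
Qed.

Lemma char_exists E z : DD E z -> z != 0 ->
  exists m : nat, (0 < m)%N /\ T_ideal E (tScal m%:Z (tVar 0)).
Proof.
move=> [s [hs Ds]] z0.
pose f := foldr step s (iota 2 (size s)).
have Df : Did E f by apply: Did_foldr.
have fi : forall i, (0 < i)%N -> nth 0 f i = 0.
  move=> i i0; rewrite nth_foldr.
  case: (ltnP i (size s)) => hi; last by rewrite nth_default // mul0r.
  apply/eqP; rewrite mulf_eq0; apply/orP; right; rewrite prodf_seq_eq0.
  apply/hasP; exists i.+1; last by rewrite subrr.
  rewrite mem_iota; apply/andP; split; first by [].
  by rewrite add2n ltnS ltnW.
have f0 : nth 0 f 0 != 0.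
  rewrite nth_foldr hs mulf_neq0 // prodf_seq_neq0; apply/allP => j.
  rewrite mem_iota => /andP [hj _]; exact: two_neq.
exists (absz (nth 0 f 0)); split; first by rewrite absz_gt0.
move=> R hR b /=. have := Df R hR (b 0%N). rewrite ev_head //.
case: (nth 0 f 0) => n //= e. move/eqP: e; rewrite NegzE mulrNz oppr_eq0 => /eqP e.
exact: e.
Qed.
Lemma ex_min (P : nat -> Prop) : (exists n, P n) ->
  exists n, P n /\ forall m, (m < n)%N -> ~ P m.
Proof.
move=> [n Pn]; apply: NNPP => hno.
suff: forall k m, (m <= k)%N -> ~ P m by move/(_ n n (leqnn n)).
elim=> [|k IH] m hm.
  rewrite leqn0 in hm; move/eqP: hm => -> P0; apply: hno; exists 0%N; split => // m'.
move=> Pm; apply: hno; exists m; split => // m' hm'; apply: IH.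
by rewrite -ltnS (leq_trans hm').
Qed.

Lemma D_div E (n0 : nat) z : (0 < n0)%N ->
  (forall m, (m < n0)%N -> ~ ((0 < m)%N /\ DD E m%:Z)) -> DD E n0%:Z -> DD E z ->
  (n0%:Z %| z)%Z.
Proof.
move=> n0p hmin Dn Dz; apply/dvdz_mod0P.
have Dr : DD E (z %% n0%:Z)%Z.
  have -> : (z %% n0%:Z)%Z = z + (- (z %/ n0%:Z)%Z) * n0%:Z.
    by rewrite {2}(divz_eq z n0%:Z) mulNr addrC addKr.
  by apply: D_add => //; apply: D_scale.
have hge : 0 <= (z %% n0%:Z)%Z by apply: modz_ge0; rewrite eqz_nat -lt0n.
have hlt : (z %% n0%:Z)%Z < n0%:Z by apply: ltz_pmod; rewrite ltz_nat.
move: Dr hge hlt; case: (z %% n0%:Z)%Z => // r Dr _; rewrite ltz_nat => hr.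
case: r hr Dr => // r hr Dr; exfalso; exact: (hmin r.+1 hr).
Qed.

Fixpoint pwR {R : rng} (a : R) n := match n with 0 => a | n'.+1 => rmul (pwR a n') a end.
Lemma eval_tpow (R : rng) (b : nat -> R) n : eval b (tpowS (tVar 0) n) = pwR (b 0%N) n.
Proof. by elim: n => [|n IH] //=; rewrite IH. Qed.
Lemma pw_lmul (R : rng) (a : R) n : rmul a (pwR a n) = pwR a n.+1.
Proof. elim: n => [|n IH] //=; by rewrite rmulA IH. Qed.
Lemma rmul_sumr (R : rng) (a : R) n (F : 'I_n -> R) :
  rmul a (\sum_(i < n) F i) = \sum_(i < n) rmul a (F i).
Proof.
apply: (big_rec2 (fun x y => rmul a x = y)); first exact: rmul0r.
by move=> i y1 y2 _ <-; rewrite rmulDr.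
Qed.
Lemma ev_sum (R : rng) (s : seq int) (a : R) :
  ev s a = \sum_(i < size s) pwR a i *~ nth 0 s i.
Proof.
elim: s => [|c s IH] /=; first by rewrite big_ord0.
rewrite big_ord_recl /= IH rmul_sumr; congr (_ + _); apply: eq_bigr => i _.
by rewrite rmulzr pw_lmul.
Qed.
Lemma eval_foldr (R : rng) (b : nat -> R) l :
  eval b (foldr tAdd tZero l) = \sum_(t <- l) eval b t.
Proof. elim: l => [|t l IH] /=; by rewrite ?big_nil ?big_cons ?IH. Qed.

Lemma eval_final (R : rng) (b : nat -> R) (c : int) (rest : seq int) :
  eval b (tAdd (tScal c (tVar 0)) (x2g (Poly rest) (tVar 0))) = ev (c :: rest) (b 0%N).
Proof.
rewrite /= /x2g eval_foldr big_map; congr (_ + _).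
have -> : iota 0 (size (Poly rest)) = index_iota 0 (size (Poly rest)) by rewrite /index_iota subn0.
rewrite big_mkord ev_sum rmul_sumr.
rewrite (eq_bigr (fun i : 'I_ _ => pwR (b 0%N) i.+1 *~ (Poly rest)`_i)); last first.
  by move=> i _; rewrite /= eval_tpow.
rewrite (big_ord_widen (size rest) (fun i => pwR (b 0%N) i.+1 *~ (Poly rest)`_i)) ?size_Poly //.
rewrite big_mkcond; apply: eq_bigr => i _ /=.
rewrite rmulzr pw_lmul coef_Poly.
case: ifP => // /negbT; rewrite -leqNgt => hi.
by rewrite -coef_Poly nth_default // mulr0z.
Qed.

Lemma sqfree_prod (n : nat) : (0 < n)%N ->
  (forall p, prime p -> ~ (p * p %| n)%N) -> n = (\prod_(q <- primes n) q)%N.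
Proof.
move=> n0 hsq; rewrite {1}(prod_prime_decomp n0) prime_decompE big_map /=.
apply: eq_big_seq => q; rewrite mem_primes => /and3P [pq _ qn].
have h1 : (0 < logn q n)%N by rewrite logn_gt0 mem_primes pq n0 qn.
have h2 : (logn q n <= 1)%N.
  rewrite leqNgt; apply/negP => h; apply: (hsq q pq).
  by rewrite (_ : (q * q = q ^ 2)%N) ?pfactor_dvdn // expnS expn1.
have -> : logn q n = 1%N by apply/eqP; rewrite eqn_leq h2 h1.
by rewrite expn1.
Qed.
Theorem proposition6 (E : term -> Prop) :
  (forall R S : rng, in_variety E R -> in_variety E S ->
     finite_rng R -> finite_rng S -> zd_graph_iso R S -> rng_iso R S) ->
  exists (m : nat) (g : {poly int}) (d : int),
    [/\ (0 < m)%N,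
        T_ideal E (tScal m%:Z (tVar 0)),
        T_ideal E (tAdd (tScal d (tVar 0)) (x2g g (tVar 0))) &
        (d = 1 \/ exists qs : seq nat,
           [/\ qs != [::], uniq qs, all prime qs,
               all (fun q => q %| m)%N qs & d = (\prod_(q <- qs) q)%:Z])].
Proof.
move=> H.
case: (classic (exists n : nat, (0 < n)%N /\ DD E n%:Z)) => [hex|hno]; last first.
  exfalso; apply: (@contra_sq E 2 isT H) => f Ef k.
  have Dl := @D_lin E f k Ef.
  suff -> : lin k f = 0 by exact: dvdz0.
  move: Dl; case: (lin k f) => [[|n]|n] Dl //; exfalso; apply: hno.
    by exists n.+1.
  exists n.+1; split => //; have := @D_scale E (-1) _ Dl.
  by rewrite NegzE mulN1r opprK.
have [n0 [[n0p Dn0] hmin]] := @ex_min (fun n : nat => (0 < n)%N /\ DD E n%:Z) hex.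
have hdiv : forall z, DD E z -> (n0%:Z %| z)%Z.
  by move=> z; apply: D_div.
have hsq : forall p, prime p -> ~ (p * p %| n0)%N.
  move=> p pp hp; apply: (@contra_sq E p pp H) => f Ef k.
  exact: (dvdz_trans _ (hdiv _ (@D_lin E f k Ef))).
have n0nz : n0%:Z != 0 by rewrite eqz_nat -lt0n.
have [m [m0 Tm]] := @char_exists E _ Dn0 n0nz.
have [s [hs Ds]] := Dn0.
case: s hs Ds => [|c rest] /= hs Ds.
  by move: n0nz; rewrite -hs eqxx.
exists (m * n0)%N, (Poly rest), n0%:Z; split.
- by rewrite muln_gt0 m0.
- move=> R hR b /=; have := Tm R hR b; rewrite /= PoszM mulrzA => ->.
  by rewrite mul0rz.
- by move=> R hR b; rewrite eval_final -hs; exact: Ds R hR (b 0%N).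
have hp := @sqfree_prod n0 n0p hsq.
case: (eqVneq n0 1%N) => [->|n1]; first by left.
right; exists (primes n0); split.
- by apply: contra n1 => /eqP e; rewrite hp e big_nil.
- exact: primes_uniq.
- by apply/allP => q; rewrite mem_primes => /andP [].
- by apply/allP => q; rewrite mem_primes => /and3P [_ _ qn]; rewrite dvdn_mull.
- by rewrite -hp.
Qed.
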